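(* Let $\mathcal{X}$ be a compact Polish space and $(\mathcal{Y},d_{\mathcal{Y}})$ a separable metric space. Then there is a metric $d_{\mathcal{X}}$ on $\mathcal{X}$ generating the topology of $\mathcal{X}$ such that the set of Lipschitz maps from $(\mathcal{X},d_{\mathcal{X}})$ to $(\mathcal{Y},d_{\mathcal{Y}})$ is uniformly dense in $C(\mathcal{X},\mathcal{Y})$.
   Context: $C(\mathcal{X},\mathcal{Y})$ is the set of continuous maps, with the topology of uniform convergence. *)

(* Defs.v *)
From HB Require Import structures.
From mathcomp Require Import all_boot all_order all_algebra.
From mathcomp Require Import all_classical all_reals topology.
Set Implicit Arguments. Unset Strict Implicit. Unset Printing Implicit Defensive.
Import Order.TTheory GRing.Theory Num.Theory.
Local Open Scope classical_set_scope.
Local Open Scope ring_scope.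

Definition is_metric (R : realType) (T : Type) (d : T -> T -> R) : Prop :=
  (forall x y, 0 <= d x y) /\
  (forall x y, d x y = 0 <-> x = y) /\
  (forall x y, d x y = d y x) /\
  (forall x y z, d x z <= d x y + d y z).

Definition metric_generates (R : realType) (T : topologicalType)
  (d : T -> T -> R) : Prop :=
  forall A : set T, open A <->
    (forall x, A x -> exists e : R, 0 < e /\ forall y, d x y < e -> A y).

Definition metric_complete (R : realType) (T : Type) (d : T -> T -> R) : Prop :=
  forall u : nat -> T,
    (forall e : R, 0 < e -> exists N, forall m n, (N <= m)%N -> (N <= n)%N ->
        d (u m) (u n) < e) ->
    exists l, forall e : R, 0 < e -> exists N, forall n, (N <= n)%N -> d (u n) l < e.

Definition polish (R : realType) (T : topologicalType) : Prop :=
  (exists D : set T, countable D /\ closure D = setT) /\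
  (exists d : T -> T -> R, is_metric d /\ metric_generates d /\ metric_complete d).

Definition metric_separable (R : realType) (T : Type) (d : T -> T -> R) : Prop :=
  exists D : set T, countable D /\
    forall y (e : R), 0 < e -> exists2 z, D z & d y z < e.

Definition continuous_into (R : realType) (X : topologicalType) (Y : Type)
  (dY : Y -> Y -> R) (f : X -> Y) : Prop :=
  forall x (e : R), 0 < e -> exists U : set X, [/\ open U, U x &
    forall u, U u -> dY (f x) (f u) < e].

Definition lipschitz (R : realType) (X Y : Type)
  (dX : X -> X -> R) (dY : Y -> Y -> R) (g : X -> Y) : Prop :=
  exists L : R, forall x x', dY (g x) (g x') <= L * dX x x'.

(* Main.v *)
Require Import Defs.
From HB Require Import structures.
From mathcomp Require Import all_boot all_order all_algebra.
From mathcomp Require Import all_classical all_reals topology.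
From mathcomp Require Import lra.
Import Order.TTheory GRing.Theory Num.Theory.
Local Open Scope classical_set_scope.
Local Open Scope ring_scope.
Set Implicit Arguments. Unset Strict Implicit.

Lemma small_inv (R : realType) (e : R) : 0 < e -> exists n : nat, (n.+1%:R)^-1 < e.
Proof.
move=> e0; have ei : 0 <= e^-1 by rewrite invr_ge0 ltW.
have := archi_boundP ei; set n := Num.Def.archi_bound _ => hn.
exists n; rewrite invf_plt ?posrE //; apply: (lt_le_trans hn).
by rewrite ler_nat.
Qed.

Lemma finite_bound (R : realType) (I : eqType) (F : I -> R) (s : seq I) :
  exists M, 0 <= M /\ forall i, i \in s -> F i <= M.
Proof.
elim: s => [|a s [M [M0 HM]]]; first by exists 0.
exists (Num.max (F a) M); split; first by rewrite le_max M0 orbT.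
move=> i; rewrite in_cons => /orP[/eqP->|/HM h]; rewrite le_max ?lexx //.
by rewrite h orbT.
Qed.

Lemma finite_min (R : realType) (I : eqType) (F : I -> R) (s : seq I) :
  (forall i, i \in s -> 0 < F i) ->
  exists2 r, 0 < r & forall i, i \in s -> r <= F i.
Proof.
elim: s => [|a s IH] H; first by exists 1.
have [r r0 Hr] : exists2 r, 0 < r & forall i, i \in s -> r <= F i.
  by apply: IH => i hi; apply: H; rewrite in_cons hi orbT.
exists (Num.min (F a) r); first by rewrite lt_min r0 H ?mem_head.
move=> i; rewrite in_cons => /orP[/eqP->|/Hr h]; rewrite ge_min ?lexx //.
by rewrite h orbT.
Qed.

Lemma ball_open (R : realType) (X : topologicalType) (d : X -> X -> R) :
  is_metric d -> metric_generates d -> forall c r, open [set y | d c y < r].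
Proof.
move=> [d0 [dE [dC dT]]] gen c r; apply/gen => y /= hy.
exists (r - d c y); split; first by rewrite subr_gt0.
move=> z hz; apply: (le_lt_trans (dT c y z)).
by rewrite -ltrBrDl.
Qed.

Lemma compact_fin (X : topologicalType) (U : X -> set X) :
  compact [set: X] -> (forall c, open (U c)) -> (forall c, U c c) ->
  exists s : seq X, forall x, exists2 c, c \in s & U c x.
Proof.
move=> cpt Uo Uc; apply: contrapT => nS.
have nS' : forall s : seq X, exists x, forall c, c \in s -> ~ U c x.
  move=> s; apply: contrapT => h; apply: nS; exists s => x.
  apply: contrapT => hx; apply: h; exists x => c cs Ucx; apply: hx; by exists c.
pose B := fun s : seq X => [set x | forall c, c \in s -> ~ U c x].
have FG : Filter (filter_from [set: seq X] B).
  apply: filter_from_filter; first by exists [::].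
  move=> s1 s2 _ _; exists (s1 ++ s2) => // x /= hx; split => c hc;
    by apply: hx; rewrite mem_cat hc ?orbT.
have PG : ProperFilter (filter_from [set: seq X] B).
  by apply: filter_from_proper => s _; have [x hx] := nS' s; exists x.
have [x [_ cl]] := cpt _ PG (@filterT _ _ FG).
have [y [/= hy1 hy2]] : B [:: x] `&` U x !=set0.
  apply: cl; first by exists [:: x].
  by apply: open_nbhs_nbhs; split.
by apply: (hy1 x); rewrite ?mem_head.
Qed.

Lemma net_ex (R : realType) (X : topologicalType) (d : X -> X -> R) :
  compact [set: X] -> is_metric d -> metric_generates d ->
  forall r, 0 < r -> exists s : seq X, forall x,
    exists i, (i < size s)%N /\ d (nth x s i) x < r.
Proof.
move=> cpt dm gen r r0.
have dcc : forall c, d c c = 0 by case: dm => _ [dE _] c; apply/dE.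
have [s hs] := @compact_fin _ (fun c => [set y | d c y < r]) cpt
  (fun c => ball_open dm gen c r) (fun c => ltac:(by rewrite /= dcc)).
exists s => x; have [c cs hc] := hs x.
by exists (index c s); rewrite index_mem cs nth_index.
Qed.

Lemma unif_cont (R : realType) (X : topologicalType) (Y : Type)
  (d : X -> X -> R) (dY : Y -> Y -> R) (f : X -> Y) :
  compact [set: X] -> is_metric d -> metric_generates d -> is_metric dY ->
  continuous_into dY f ->
  forall e, 0 < e -> exists2 del, 0 < del & forall x x', d x x' < del ->
    dY (f x) (f x') < e.
Proof.
move=> cpt dm gen [_ [_ [dYC dYT]]] fc e e0.
have h : forall c, exists r, 0 < r /\ forall y, d c y < r -> dY (f c) (f y) < e / 2.
  move=> c; have [U [Uo Uc HU]] := fc c (e / 2) ltac:(by rewrite divr_gt0).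
  have [r [r0 hr]] := (proj1 (gen U) Uo) c Uc.
  by exists r; split => // y /hr /HU.
have [r hr] := choice h.
have dcc : forall c, d c c = 0 by case: dm => _ [dE _] c; apply/dE.
have [s hs] := @compact_fin _ (fun c => [set y | d c y < r c / 2]) cpt
  (fun c => ball_open dm gen c _) (fun c => ltac:(by rewrite /= dcc divr_gt0 // (proj1 (hr c)))).
  have [del del0 hdel] := @finite_min _ _ (fun c => r c / 2) s
    (fun c _ => ltac:(by rewrite divr_gt0 // (proj1 (hr c)))).
  exists del => // x x' hxx'.
  have [c cs /= hc] := hs x.
  have h1 := (proj2 (hr c)) x ltac:(apply: (lt_trans hc); rewrite ltr_pdivrMr // ltr_pMr ?(proj1 (hr c)) // ltr1n).
  have h2 : d c x' < r c.
    case: dm => _ [_ [_ dT]]; apply: (le_lt_trans (dT c x x')).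
    rewrite (splitr (r c)); apply: ltrD => //; apply: (lt_le_trans hxx').
    exact: hdel.
  have h2' := (proj2 (hr c)) x' h2.
  apply: (le_lt_trans (dYT _ (f c) _)); rewrite (splitr e) dYC.
  exact: ltrD (h1 isT) h2'.
Qed.

Lemma bounded_cont (R : realType) (X : topologicalType) (Y : Type)
  (dY : Y -> Y -> R) (g : X -> Y) :
  compact [set: X] -> is_metric dY -> continuous_into dY g ->
  exists B, 0 <= B /\ forall x x', dY (g x) (g x') <= B.
Proof.
move=> cpt [_ [_ [dYC dYT]]] gc.
have h : forall c, exists U : set X, [/\ open U, U c & forall u, U u -> dY (g c) (g u) < 1].
  by move=> c; apply: gc.
have [U hU] := choice h.
have [s hs] := @compact_fin _ U cpt (fun c => (let: And3 a _ _ := hU c in a))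
  (fun c => (let: And3 _ a _ := hU c in a)).
have [M [M0 HM]] := @finite_bound _ _ (fun p : X * X => dY (g p.1) (g p.2))
  [seq (a, b) | a <- s, b <- s].
exists (M + 2); split; first by rewrite addr_ge0.
move=> x x'; have [c cs hc] := hs x; have [c' cs' hc'] := hs x'.
have [_ _ H1] := hU c; have [_ _ H2] := hU c'.
have := HM (c, c') (allpairs_f pair cs cs') => /= hm.
apply: (le_trans (dYT _ (g c) _)); rewrite dYC.
rewrite (addrC M) -addrA; apply: lerD; first exact/ltW/H1.
apply: (le_trans (dYT _ (g c') _)); rewrite addrC; apply: lerD => //.
exact/ltW/H2.
Qed.

Lemma enum_dense (R : realType) (Y : Type) (dY : Y -> Y -> R) (y0 : Y) :
  metric_separable dY -> exists y : nat -> Y,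
    forall z e, 0 < e -> exists j, dY z (y j) < e.
Proof.
move=> [D [/countable_injP [inj hinj] Dd]].
pose y j := match pselect (exists z, D z /\ inj z = j) with
  | left H => projT1 (cid H) | right _ => y0 end.
exists y => z e e0; have [w Dw hw] := Dd z e e0.
exists (inj w); rewrite /y; case: pselect => [H|]; last first.
  by case; exists w.
case: (cid H) => w' [Dw' hw'] /=.
by rewrite (hinj w' w) // inE.
Qed.

Lemma core (R : realType) (X : topologicalType) (Y : Type)
  (dY : Y -> Y -> R) (d : X -> X -> R) (y : nat -> Y) (y0 : Y) :
  compact [set: X] -> is_metric d -> metric_generates d -> is_metric dY ->
  (forall z e, 0 < e -> exists j, dY z (y j) < e) ->
  exists dX : X -> X -> R, [/\ is_metric dX, metric_generates dX &
    forall f : X -> Y, continuous_into dY f ->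
      forall e : R, 0 < e ->
        exists2 g : X -> Y, lipschitz dX dY g &
          forall x, dY (f x) (g x) < e].
Proof.
move=> cpt dm gen dYm yd.
have dYm' := dYm; case: dYm' => dY0 [dYE [dYC dYT]].
have dm' := dm; case: dm' => d0 [dE [dC dT]].
have dYzz : forall z, dY z z = 0 by move=> z; apply/dYE.
have [net hnet] := choice (fun k => net_ex cpt dm gen (r := k.+1%:R^-1) ltac:(by rewrite invr_gt0 ltr0n)).
pose cell (kns : nat * nat * seq nat) (h : X -> Y) : Prop :=
  let: (k, n, s) := kns in forall x i, (i < size (net k))%N ->
    d (nth x (net k) i) x < k.+1%:R^-1 -> dY (y (nth 0%N s i)) (h x) < n.+1%:R^-1.
pose P kns (hB : (X -> Y) * R) := [/\ continuous_into dY hB.1, cell kns hB.1,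
  0 <= hB.2 & forall x x', dY (hB.1 x) (hB.1 x') <= hB.2].
pose G (m : nat) : (X -> Y) * R :=
  if @unpickle (nat * nat * seq nat)%type m is Some kns then
    match pselect (exists hB, P kns hB) with
    | left H => projT1 (cid H) | right _ => (fun _ => y0, 0) end
  else (fun _ => y0, 0).
have Gok : forall m, [/\ continuous_into dY (G m).1, 0 <= (G m).2 &
    forall x x', dY ((G m).1 x) ((G m).1 x') <= (G m).2].
  have cst : continuous_into dY (fun _ : X => y0).
    by move=> x e e0; exists setT; split => // [|u _]; [exact: openT | rewrite dYzz].
  move=> m; rewrite /G; case: unpickle => [kns|]; last by split => //= *; rewrite dYzz.
  case: pselect => [H|_]; last by split => //= *; rewrite dYzz.
  by case: (cid H) => hB [].
have Gcell : forall kns, (exists hB, P kns hB) -> cell kns (G (pickle kns)).1.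
  move=> kns H0; rewrite /G pickleK; case: pselect => // H.
  by case: (cid H) => hB [].
pose a m := ((m.+1)%:R * (1 + (G m).2))^-1.
have a_gt0 : forall m, 0 < a m.
  move=> m; have [_ B0 _] := Gok m.
  by rewrite invr_gt0 mulr_gt0 ?ltr0n // ltr_pwDl.
pose t m x x' := a m * dY ((G m).1 x) ((G m).1 x').
have t_ge0 : forall m x x', 0 <= t m x x'.
  by move=> m x x'; rewrite mulr_ge0 ?dY0 // ltW.
have t_le : forall m x x', t m x x' <= (m.+1%:R)^-1.
  move=> m x x'; have [_ B0 HB] := Gok m.
  apply: (le_trans (ler_wpM2l (ltW (a_gt0 m)) (HB x x'))).
  rewrite /a invfM -mulrA -[leRHS]mulr1; apply: ler_wpM2l; first by rewrite invr_ge0.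
  rewrite mulrC ler_pdivrMr; first by rewrite mul1r lerDr.
  by rewrite ltr_pwDl.
have t_C : forall m x x', t m x x' = t m x' x by move=> m x x'; rewrite /t dYC.
have t_T : forall m x x' x'', t m x x'' <= t m x x' + t m x' x''.
  by move=> m x x' x''; rewrite /t -mulrDr ler_wpM2l ?dYT // ltW.
pose S x x' := sup (range (fun m => t m x x')).
have hub : forall x x', has_ubound (range (fun m => t m x x')).
  move=> x x'; exists 1 => _ [m _ <-]; apply: (le_trans (t_le m x x')).
  by rewrite invf_le1 ?ler1n ?ltr0n.
have hne : forall x x', range (fun m => t m x x') !=set0.
  by move=> x x'; exists (t 0%N x x'), 0%N.
have S_ge : forall m x x', t m x x' <= S x x'.
  by move=> m x x'; apply: ub_le_sup; [exact: hub | exists m].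
have S_le : forall x x' b, (forall m, t m x x' <= b) -> S x x' <= b.
  by move=> x x' b hb; apply: ge_sup => // _ [m _ <-].
have S_ge0 : forall x x', 0 <= S x x'.
  by move=> x x'; apply: le_trans (S_ge 0%N x x'); exact: t_ge0.
pose dX x x' := d x x' + S x x'.
have dX_ge_d : forall x x', d x x' <= dX x x' by move=> x x'; rewrite lerDl.
have dXm : is_metric dX.
  split; first by move=> x x'; rewrite addr_ge0.
  split.
    move=> x x'; split.
      move=> h; apply/dE; have := d0 x x'; have := S_ge0 x x'; rewrite /dX in h; lra.
    move=> <-; rewrite /dX.
    have -> : d x x = 0 by apply/dE.
    rewrite add0r; apply/eqP; rewrite eq_le S_ge0 andbT; apply: S_le => m.
    by rewrite /t dYzz mulr0.
  split.
    move=> x x'; rewrite /dX dC /S.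
    have -> : (fun m => t m x x') = (fun m => t m x' x) by apply: funext => m; exact: t_C.
    by [].
  move=> x x' x''; rewrite /dX.
  have : S x x'' <= S x x' + S x' x''.
    apply: S_le => m; apply: le_trans (t_T m x x' x'') _.
    by apply: lerD; apply: S_ge.
  have := dT x x' x''; lra.
have dXcont : forall x e, 0 < e -> exists2 del, 0 < del &
    forall x', d x x' < del -> dX x x' < e.
  move=> x e e0.
  have e20 : 0 < e / 2 by rewrite divr_gt0.
  have [n hn] := small_inv e20.
  have ind : forall N, exists2 del, 0 < del & forall x', d x x' < del ->
      forall m, (m < N)%N -> t m x x' < e / 2.
    elim=> [|N [del del0 hdel]]; first by exists 1.
    have [Gc _ _] := Gok N.
    have eps0 : 0 < e / 2 / a N by rewrite divr_gt0.
    have [U [Uo Ux HU]] := Gc x _ eps0.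
    have [r [r0 hr]] := proj1 (gen U) Uo x Ux.
    exists (Num.min del r); first by rewrite lt_min del0 r0.
    move=> x' hx' m; rewrite ltnS leq_eqVlt => /orP[/eqP->|hm].
      have := HU x' (hr x' ltac:(by move: hx'; rewrite lt_min => /andP[])).
      rewrite /t ltr_pdivlMr // => h; by rewrite mulrC.
    by apply: hdel => //; move: hx'; rewrite lt_min => /andP[].
  have [del del0 hdel] := ind n.
  exists (Num.min del (e / 2)); first by rewrite lt_min del0.
  move=> x' hx'; move: hx'; rewrite lt_min => /andP[h1 h2].
  have : S x x' <= e / 2.
    apply: S_le => m; case: (ltnP m n) => hm; first exact/ltW/hdel.
    apply: le_trans (t_le m x x') _; apply/ltW/(le_lt_trans _ hn).
    by rewrite lef_pV2 ?posrE ?ltr0n // ler_nat.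
  rewrite /dX; lra.
have dXgen : metric_generates dX.
  move=> A; split.
    move=> /(proj1 (gen A)) h x Ax; have [e [e0 he]] := h x Ax.
    exists e; split => // z hz; apply: he; exact: le_lt_trans (dX_ge_d x z) hz.
  move=> h; apply/(proj2 (gen A)) => x Ax; have [e [e0 he]] := h x Ax.
  have [del del0 hdel] := dXcont x e e0.
  by exists del; split => // z /hdel /he.
exists dX; split => // f fc e e0.
have e20 : 0 < e / 2 by rewrite divr_gt0.
have [n hn] := small_inv e20.
set r := n.+1%:R^-1 in hn.
have r0 : 0 < r by rewrite invr_gt0 ltr0n.
have r20 : 0 < r / 2 by rewrite divr_gt0.
have [del del0 hdel] := unif_cont cpt dm gen dYm fc r20.
have [k hk] := small_inv del0.
have [sig hsig] := choice (fun c => yd (f c) _ r20).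
pose kns := (k, n, map sig (net k)).
have fcell : cell kns f.
  move=> x i hi hd /=; rewrite (nth_map x) //.
  set c := nth x (net k) i in hd *.
  apply: le_lt_trans (dYT _ (f c) _) _; rewrite dYC -/r (splitr r).
  apply: ltrD; first exact: hsig.
  by apply: hdel; apply: lt_trans hk.
have [B [B0 HB]] := bounded_cont cpt dYm fc.
have gcell := Gcell kns (ex_intro _ (f, B) (And4 fc fcell B0 HB)).
set m := pickle kns in gcell.
exists (G m).1.
  exists (a m)^-1 => x x'.
  have -> : dY ((G m).1 x) ((G m).1 x') = (a m)^-1 * t m x x'.
    by rewrite /t mulrA mulVf ?mul1r // gt_eqF.
  apply: ler_wpM2l; first by rewrite invr_ge0 ltW.
  by apply: le_trans (S_ge m x x') _; rewrite lerDr d0.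
move=> x; have [i [hi hd]] := hnet k x.
have h1 := fcell x i hi hd; have h2 := gcell x i hi hd.
apply: le_lt_trans (dYT _ (y (nth 0%N (map sig (net k)) i)) _) _.
rewrite dYC; rewrite -/r in h1 h2; lra.
Qed.
Unset Implicit Arguments.
Theorem mainTheorem9 (R : realType) (X : topologicalType) (Y : Type)
  (dY : Y -> Y -> R) :
  compact [set: X] -> polish R X ->
  is_metric dY -> metric_separable dY ->
  exists dX : X -> X -> R, [/\ is_metric dX, metric_generates dX &
    forall f : X -> Y, continuous_into dY f ->
      forall e : R, 0 < e ->
        exists2 g : X -> Y, lipschitz dX dY g &
          forall x, dY (f x) (g x) < e].
Proof.
move=> cpt [_ [d [dm [gen _]]]] dYm sep.
have [[y0 _]|nY] := pselect (exists y : Y, True).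
  have [y hy] := enum_dense y0 sep.
  exact: core y0 cpt dm gen dYm hy.
exists d; split => // f _ e _; exists f => [|x]; last by exfalso; apply: nY; exists (f x).
by exists 0 => x; exfalso; apply: nY; exists (f x).
Qed.
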